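(* The first $\varepsilon\tau$-theorem holds in $\varepsilon\tau(\mathbf{LC})$ for $\varepsilon\tau$-free formulas: if $D$ is a quantifier-free formula containing no $\varepsilon\tau$-terms and $\vdash_{\varepsilon\tau(\mathbf{LC})}D$, then $\vdash_{\mathbf{LC}}D$.
   Context: $\mathbf{LC}$ is the intermediate propositional logic axiomatized over intuitionistic propositional logic by $\mathit{Lin}$: $(A\to B)\lor(B\to A)$ (infinite-valued Gödel logic). $\varepsilon\tau$-terms: $\varepsilon x\,A(x)$, $\tau x\,A(x)$ for formulas $A(x)$. Critical formulas: $A(t)\to A(\varepsilon x\,A(x))$ and $A(\tau x\,A(x))\to A(t)$. $\vdash_{\varepsilon\tau(\mathbf{L})}B$: $B$ derivable in the quantifier-free first-order language with $\varepsilon\tau$-terms from critical formulas using substitution instances of theorems of $\mathbf{L}$ and modus ponens; $\vdash_{\mathbf{L}}$ is the same without critical formulas. *)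

(* Defs.v *)
From Stdlib Require Import List Arith.
Import ListNotations.
Set Implicit Arguments.

Section Syntax.
Variables (Fsym Psym : Type).

(* Terms and quantifier-free formulas.  [Eps A] stands for eps x A(x) and
   [Tau A] for tau x A(x), where the bound variable x is de Bruijn index 0 in A. *)
Inductive term : Type :=
| Var : nat -> term
| App : Fsym -> list term -> term
| Eps : formula -> term
| Tau : formula -> term
with formula : Type :=
| Atom : Psym -> list term -> formula
| FBot : formula
| FAnd : formula -> formula -> formula
| FOr  : formula -> formula -> formula
| FImp : formula -> formula -> formula.

Fixpoint lift_t (c : nat) (t : term) : term :=
  match t with
  | Var n => if n <? c then Var n else Var (S n)
  | App f ts => App f (map (lift_t c) ts)
  | Eps A => Eps (lift_f (S c) A)
  | Tau A => Tau (lift_f (S c) A)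
  end
with lift_f (c : nat) (A : formula) : formula :=
  match A with
  | Atom p ts => Atom p (map (lift_t c) ts)
  | FBot => FBot
  | FAnd B C => FAnd (lift_f c B) (lift_f c C)
  | FOr B C => FOr (lift_f c B) (lift_f c C)
  | FImp B C => FImp (lift_f c B) (lift_f c C)
  end.

Fixpoint subst_t (k : nat) (u : term) (t : term) : term :=
  match t with
  | Var n => if n <? k then Var n else if n =? k then u else Var (pred n)
  | App f ts => App f (map (subst_t k u) ts)
  | Eps A => Eps (subst_f (S k) (lift_t 0 u) A)
  | Tau A => Tau (subst_f (S k) (lift_t 0 u) A)
  end
with subst_f (k : nat) (u : term) (A : formula) : formula :=
  match A with
  | Atom p ts => Atom p (map (subst_t k u) ts)
  | FBot => FBot
  | FAnd B C => FAnd (subst_f k u B) (subst_f k u C)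
  | FOr B C => FOr (subst_f k u B) (subst_f k u C)
  | FImp B C => FImp (subst_f k u B) (subst_f k u C)
  end.

(* A(t) for A = A(x) with x the bound index 0 *)
Definition inst (A : formula) (t : term) : formula := subst_f 0 t A.

Fixpoint etfree_t (t : term) : Prop :=
  match t with
  | Var _ => True
  | App _ ts => fold_right (fun s P => etfree_t s /\ P) True ts
  | Eps _ => False
  | Tau _ => False
  end.

Fixpoint etfree_f (A : formula) : Prop :=
  match A with
  | Atom _ ts => fold_right (fun s P => etfree_t s /\ P) True ts
  | FBot => True
  | FAnd B C | FOr B C | FImp B C => etfree_f B /\ etfree_f C
  end.
End Syntax.

Arguments Var {Fsym Psym}.
Arguments FBot {Fsym Psym}.

Inductive pform : Type :=
| PVar : nat -> pform
| PBot : pform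
| PAnd : pform -> pform -> pform
| POr  : pform -> pform -> pform
| PImp : pform -> pform -> pform.

(* Theorems of LC: intuitionistic propositional logic (Hilbert system)
   plus the linearity axiom (A -> B) \/ (B -> A), closed under modus ponens. *)
Inductive LC_thm : pform -> Prop :=
| LC_K  A B : LC_thm (PImp A (PImp B A))
| LC_S  A B C : LC_thm (PImp (PImp A (PImp B C)) (PImp (PImp A B) (PImp A C)))
| LC_A1 A B : LC_thm (PImp (PAnd A B) A)
| LC_A2 A B : LC_thm (PImp (PAnd A B) B)
| LC_A3 A B : LC_thm (PImp A (PImp B (PAnd A B)))
| LC_O1 A B : LC_thm (PImp A (POr A B))
| LC_O2 A B : LC_thm (PImp B (POr A B))
| LC_O3 A B C : LC_thm (PImp (PImp A C) (PImp (PImp B C) (PImp (POr A B) C)))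
| LC_EFQ A : LC_thm (PImp PBot A)
| LC_Lin A B : LC_thm (POr (PImp A B) (PImp B A))
| LC_MP A B : LC_thm (PImp A B) -> LC_thm A -> LC_thm B.

Fixpoint psubst {F P : Type} (s : nat -> formula F P) (A : pform) : formula F P :=
  match A with
  | PVar n => s n
  | PBot => FBot
  | PAnd B C => FAnd (psubst s B) (psubst s C)
  | POr B C => FOr (psubst s B) (psubst s C)
  | PImp B C => FImp (psubst s B) (psubst s C)
  end.

Inductive prov_et {F P : Type} : formula F P -> Prop :=
| et_ax (A : pform) (s : nat -> formula F P) :
    LC_thm A -> prov_et (psubst s A)
| et_crit_eps (A : formula F P) (t : term F P) :
    prov_et (FImp (inst A t) (inst A (Eps A)))
| et_crit_tau (A : formula F P) (t : term F P) :
    prov_et (FImp (inst A (Tau A)) (inst A t))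
| et_mp (A B : formula F P) : prov_et (FImp A B) -> prov_et A -> prov_et B.

Inductive prov_LC {F P : Type} : formula F P -> Prop :=
| lc_ax (A : pform) (s : nat -> formula F P) :
    LC_thm A -> prov_LC (psubst s A)
| lc_mp (A B : formula F P) : prov_LC (FImp A B) -> prov_LC A -> prov_LC B.

(* Main.v *)
Require Import Defs.
From Stdlib Require Import List Arith Lia Classical ClassicalEpsilon FunctionalExtensionality.
Import ListNotations.

Section Ind.
Variables (F P : Type) (Pt : term F P -> Prop) (Pf : formula F P -> Prop).
Hypotheses
 (hV : forall n, Pt (Var n))
 (hA : forall f ts, Forall Pt ts -> Pt (App f ts))
 (hE : forall A, Pf A -> Pt (Eps A)) (hT : forall A, Pf A -> Pt (Tau A))
 (hAt : forall p ts, Forall Pt ts -> Pf (Atom p ts))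
 (hB : Pf FBot)
 (hAnd : forall B C, Pf B -> Pf C -> Pf (FAnd B C))
 (hOr : forall B C, Pf B -> Pf C -> Pf (FOr B C))
 (hImp : forall B C, Pf B -> Pf C -> Pf (FImp B C)).

Fixpoint tind (t : term F P) : Pt t :=
 match t with
 | Var n => hV n
 | App f ts => hA f ts ((fix go (l : list (term F P)) : Forall Pt l :=
      match l with nil => @Forall_nil _ Pt | cons x l' => @Forall_cons _ Pt x l' (tind x) (go l') end) ts)
 | Eps A => hE A (find A)
 | Tau A => hT A (find A)
 end
with find (A : formula F P) : Pf A :=
 match A with
 | Atom p ts => hAt p ts ((fix go (l : list (term F P)) : Forall Pt l :=
      match l with nil => @Forall_nil _ Pt | cons x l' => @Forall_cons _ Pt x l' (tind x) (go l') end) ts)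
 | FBot => hB
 | FAnd B C => hAnd B C (find B) (find C)
 | FOr B C => hOr B C (find B) (find C)
 | FImp B C => hImp B C (find B) (find C)
 end.

Lemma tf_ind : (forall t, Pt t) /\ (forall A, Pf A).
Proof. split; [exact tind | exact find]. Qed.
End Ind.

Lemma map_eq_Forall {A B} (f g : A -> B) l : Forall (fun x => f x = g x) l -> map f l = map g l.
Proof. induction 1; simpl; f_equal; auto. Qed.

Section Sem.
Variables (F P : Type) (T : nat) (I : P -> list (term F P) -> nat).
Hypothesis Ibound : forall p ts, I p ts <= T.

Definition gimp a b := if a <=? b then T else b.

Definition epsc (g : term F P -> nat) : term F P :=
  match excluded_middle_informative (exists d, forall d', g d' <= g d) with
  | left h => proj1_sig (constructive_indefinite_description _ h)
  | right _ => Var 0 end.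
Definition tauc (g : term F P -> nat) : term F P :=
  match excluded_middle_informative (exists d, forall d', g d <= g d') with
  | left h => proj1_sig (constructive_indefinite_description _ h)
  | right _ => Var 0 end.

Lemma epsc_spec g : (exists d, forall d', g d' <= g d) -> forall d', g d' <= g (epsc g).
Proof.
  intros h. unfold epsc. destruct excluded_middle_informative as [h'|n]; [|contradiction].
  destruct constructive_indefinite_description; simpl; auto.
Qed.

Lemma max_ex (g : term F P -> nat) B : (forall d, g d <= B) -> exists d, forall d', g d' <= g d.
Proof.
  intros hb. apply NNPP; intro hn.
  assert (H : forall d, exists d', g d < g d').
  { intro d. apply NNPP; intro h2. apply hn. exists d. intro d'. apply NNPP; intro h3.
    apply h2. exists d'. lia. }
  assert (K : forall k, exists d, k <= g d).
  { induction k. exists (Var 0). lia. destruct IHk as [d hd]. destruct (H d) as [d' hd'].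
    exists d'. lia. }
  destruct (K (S B)) as [d hd]. specialize (hb d). lia.
Qed.

Lemma tauc_spec g : forall d', g (tauc g) <= g d'.
Proof.
  assert (h : exists d, forall d', g d <= g d').
  { apply NNPP; intro hn.
    assert (H : forall d, exists d', g d' < g d).
    { intro d. apply NNPP; intro h2. apply hn. exists d. intro d'. apply NNPP; intro h3.
      apply h2. exists d'. lia. }
    assert (K : forall k d, g d <= k -> False).
    { induction k; intros d hd; destruct (H d) as [d' hd']. lia. apply (IHk d'). lia. }
    exact (K _ (Var 0) (le_n _)). }
  unfold tauc. destruct excluded_middle_informative as [h'|n]; [|contradiction].
  destruct constructive_indefinite_description; simpl; auto.
Qed.

Definition scons (d : term F P) (r : nat -> term F P) (n : nat) : term F P :=
  match n with 0 => d | S m => r m end.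

Fixpoint eval_t (r : nat -> term F P) (t : term F P) : term F P :=
  match t with
  | Var n => r n
  | App f ts => App f (map (eval_t r) ts)
  | Eps A => epsc (fun d => eval_f (scons d r) A)
  | Tau A => tauc (fun d => eval_f (scons d r) A)
  end
with eval_f (r : nat -> term F P) (A : formula F P) : nat :=
  match A with
  | Atom p ts => I p (map (eval_t r) ts)
  | FBot => 0
  | FAnd B C => min (eval_f r B) (eval_f r C)
  | FOr B C => max (eval_f r B) (eval_f r C)
  | FImp B C => gimp (eval_f r B) (eval_f r C)
  end.

Lemma bound r A : eval_f r A <= T.
Proof.
  induction A; simpl; try lia. apply Ibound. unfold gimp. destruct (_ <=? _); lia.
Qed.

Definition skip (c : nat) (r : nat -> term F P) n := if n <? c then r n else r (S n).
Definition ins k v (r : nat -> term F P) n := if n <? k then r n else if n =? k then v else r (pred n).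

Ltac ltcases := repeat match goal with
  | |- context [?a <? ?b] => destruct (Nat.ltb_spec a b)
  | |- context [?a =? ?b] => destruct (Nat.eqb_spec a b) end.

Lemma eval_lift : (forall t c r, eval_t r (lift_t c t) = eval_t (skip c r) t) /\
                  (forall A c r, eval_f r (lift_f c A) = eval_f (skip c r) A).
Proof.
  apply tf_ind; intros; simpl.
  - unfold skip. destruct (n <? c); reflexivity.
  - f_equal. rewrite map_map. apply map_eq_Forall. eapply Forall_impl; [|exact H]. simpl; auto.
  - f_equal. apply functional_extensionality; intro d. rewrite H. f_equal.
    apply functional_extensionality; intros [|n]; unfold skip; simpl; auto; ltcases; auto.
  - f_equal. apply functional_extensionality; intro d. rewrite H. f_equal.
    apply functional_extensionality; intros [|n]; unfold skip; simpl; auto; ltcases; auto.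
  - f_equal. rewrite map_map. apply map_eq_Forall. eapply Forall_impl; [|exact H]. simpl; auto.
  - auto.
  - rewrite H, H0; auto.
  - rewrite H, H0; auto.
  - rewrite H, H0; auto.
Qed.

Lemma skip0 d r : skip 0 (scons d r) = r.
Proof. apply functional_extensionality; intro n. reflexivity. Qed.

Lemma ins_scons k v d r : ins (S k) v (scons d r) = scons d (ins k v r).
Proof.
  apply functional_extensionality; intros [|n]; unfold ins; simpl; auto.
  ltcases; auto; try lia. destruct n; [lia|]. reflexivity.
Qed.

Lemma eval_subst : (forall t k u r, eval_t r (subst_t k u t) = eval_t (ins k (eval_t r u) r) t) /\
                  (forall A k u r, eval_f r (subst_f k u A) = eval_f (ins k (eval_t r u) r) A).
Proof.
  apply tf_ind; intros; simpl.
  - unfold ins. ltcases; reflexivity.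
  - f_equal. rewrite map_map. apply map_eq_Forall. eapply Forall_impl; [|exact H]. simpl; auto.
  - f_equal. apply functional_extensionality; intro d. rewrite H. f_equal.
    rewrite (proj1 eval_lift), skip0. apply ins_scons.
  - f_equal. apply functional_extensionality; intro d. rewrite H. f_equal.
    rewrite (proj1 eval_lift), skip0. apply ins_scons.
  - f_equal. rewrite map_map. apply map_eq_Forall. eapply Forall_impl; [|exact H]. simpl; auto.
  - auto.
  - rewrite H, H0; auto.
  - rewrite H, H0; auto.
  - rewrite H, H0; auto.
Qed.

Lemma ins0 v r : ins 0 v r = scons v r.
Proof. apply functional_extensionality; intros [|n]; reflexivity. Qed.

Lemma eval_inst r A t : eval_f r (inst A t) = eval_f (scons (eval_t r t) r) A.
Proof. unfold inst. rewrite (proj2 eval_subst), ins0. reflexivity. Qed.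

Ltac gen_bounds := repeat match goal with
  | |- context [eval_f ?r (psubst ?s ?X)] =>
     let H := fresh in pose proof (bound r (psubst s X)) as H; revert H;
     generalize (eval_f r (psubst s X)); intros ? ? end.

Ltac lecases := repeat match goal with
  | |- context [?a <=? ?b] =>
     tryif (match a with context [Nat.leb _ _] => idtac end) then fail else
     tryif (match b with context [Nat.leb _ _] => idtac end) then fail else
     destruct (Nat.leb_spec a b) end.

Lemma LC_sound A : LC_thm A -> forall s r, eval_f r (psubst s A) = T.
Proof.
  induction 1; intros s r; simpl.
  all: try (gen_bounds; intros; unfold gimp; lecases; lia).
  specialize (IHLC_thm1 s r). specialize (IHLC_thm2 s r). simpl in IHLC_thm1.
  rewrite IHLC_thm2 in IHLC_thm1. unfold gimp in IHLC_thm1. pose proof (bound r (psubst s B)).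
  destruct (Nat.leb_spec T (eval_f r (psubst s B))); lia.
Qed.

Lemma et_sound D : prov_et D -> forall r, eval_f r D = T.
Proof.
  induction 1; intro r.
  - apply LC_sound; auto.
  - simpl. rewrite !eval_inst. simpl. unfold gimp.
    rewrite (proj2 (Nat.leb_le _ _)); auto. apply (epsc_spec (fun d => eval_f (scons d r) A)).
    eapply max_ex. intro; apply bound.
  - simpl. rewrite !eval_inst. simpl. unfold gimp.
    rewrite (proj2 (Nat.leb_le _ _)); auto. apply (tauc_spec (fun d => eval_f (scons d r) A)).
  - specialize (IHprov_et1 r). specialize (IHprov_et2 r). simpl in IHprov_et1.
    rewrite IHprov_et2 in IHprov_et1. unfold gimp in IHprov_et1. pose proof (bound r B).
    destruct (Nat.leb_spec T (eval_f r B)); lia.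
Qed.

Fixpoint pv (A : formula F P) : nat :=
  match A with
  | Atom p ts => I p ts
  | FBot => 0
  | FAnd B C => min (pv B) (pv C)
  | FOr B C => max (pv B) (pv C)
  | FImp B C => gimp (pv B) (pv C)
  end.

Definition rid : nat -> term F P := fun n => Var n.

Lemma etfree_map ts : Forall (fun t => etfree_t t -> eval_t rid t = t) ts ->
  fold_right (fun s P => etfree_t s /\ P) True ts -> map (eval_t rid) ts = ts.
Proof. induction 1; simpl; intros; auto. destruct H1. f_equal; auto. Qed.

Lemma eval_free : (forall t, etfree_t t -> eval_t rid t = t) /\
                  (forall A, etfree_f A -> eval_f rid A = pv A).
Proof.
  apply tf_ind; intros; simpl in *; try tauto.
  - f_equal. apply etfree_map; auto.
  - f_equal. apply etfree_map; auto.
  - destruct H1; rewrite H, H0; auto.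
  - destruct H1; rewrite H, H0; auto.
  - destruct H1; rewrite H, H0; auto.
Qed.
End Sem.
Section Compl.
Variables (F P : Type).
Notation fm := (formula F P).

Inductive Der (G : list fm) : fm -> Prop :=
| Dhyp A : In A G -> Der G A
| Dthm A : prov_LC A -> Der G A
| Dmp A B : Der G (FImp A B) -> Der G A -> Der G B.

Definition s3 (X Y Z : fm) : nat -> fm := fun n => match n with 0 => X | 1 => Y | _ => Z end.

Lemma pK (X Y : fm) : prov_LC (FImp X (FImp Y X)).
Proof. exact (lc_ax (s3 X Y X) (LC_K (PVar 0) (PVar 1))). Qed.
Lemma pS (X Y Z : fm) : prov_LC (FImp (FImp X (FImp Y Z)) (FImp (FImp X Y) (FImp X Z))).
Proof. exact (lc_ax (s3 X Y Z) (LC_S (PVar 0) (PVar 1) (PVar 2))). Qed.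
Lemma pA1 (X Y : fm) : prov_LC (FImp (FAnd X Y) X).
Proof. exact (lc_ax (s3 X Y X) (LC_A1 (PVar 0) (PVar 1))). Qed.
Lemma pA2 (X Y : fm) : prov_LC (FImp (FAnd X Y) Y).
Proof. exact (lc_ax (s3 X Y X) (LC_A2 (PVar 0) (PVar 1))). Qed.
Lemma pA3 (X Y : fm) : prov_LC (FImp X (FImp Y (FAnd X Y))).
Proof. exact (lc_ax (s3 X Y X) (LC_A3 (PVar 0) (PVar 1))). Qed.
Lemma pO1 (X Y : fm) : prov_LC (FImp X (FOr X Y)).
Proof. exact (lc_ax (s3 X Y X) (LC_O1 (PVar 0) (PVar 1))). Qed.
Lemma pO2 (X Y : fm) : prov_LC (FImp Y (FOr X Y)).
Proof. exact (lc_ax (s3 X Y X) (LC_O2 (PVar 0) (PVar 1))). Qed.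
Lemma pO3 (X Y Z : fm) : prov_LC (FImp (FImp X Z) (FImp (FImp Y Z) (FImp (FOr X Y) Z))).
Proof. exact (lc_ax (s3 X Y Z) (LC_O3 (PVar 0) (PVar 1) (PVar 2))). Qed.
Lemma pEFQ (X : fm) : prov_LC (FImp FBot X).
Proof. exact (lc_ax (s3 X X X) (LC_EFQ (PVar 0))). Qed.
Lemma pLin (X Y : fm) : prov_LC (FOr (FImp X Y) (FImp Y X)).
Proof. exact (lc_ax (s3 X Y X) (LC_Lin (PVar 0) (PVar 1))). Qed.

Lemma pI (X : fm) : prov_LC (FImp X X).
Proof.
  eapply lc_mp. eapply lc_mp. apply (pS X (FImp X X) X). apply pK. apply (pK X X).
Qed.

Lemma Dweak G C : Der G C -> forall G', incl G G' -> Der G' C.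
Proof. induction 1; intros; [apply Dhyp; auto | apply Dthm; auto | eapply Dmp; eauto]. Qed.

Lemma Dnil C : Der [] C -> prov_LC C.
Proof. induction 1; [destruct H | auto | eapply lc_mp; eauto]. Qed.

Lemma Dded G H C : Der (H :: G) C -> Der G (FImp H C).
Proof.
  induction 1.
  - destruct H0 as [<-|h]. apply Dthm, pI.
    eapply Dmp. apply Dthm, pK. apply Dhyp; auto.
  - eapply Dmp. apply Dthm, pK. apply Dthm; auto.
  - eapply Dmp. eapply Dmp. apply Dthm, pS. eauto. eauto.
Qed.

Lemma Dcons G H C : Der G C -> Der (H :: G) C.
Proof. intros; eapply Dweak; eauto. intros x hx; simpl; auto. Qed.

Lemma Dh G H : Der (H :: G) H.
Proof. apply Dhyp; simpl; auto. Qed.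

Lemma Dtrans G X Y Z : Der G (FImp X Y) -> Der G (FImp Y Z) -> Der G (FImp X Z).
Proof.
  intros h1 h2. apply Dded. eapply Dmp. apply Dcons; eauto. eapply Dmp. apply Dcons; eauto. apply Dh.
Qed.

Lemma DorE G X Y Z : Der G (FOr X Y) -> Der (X :: G) Z -> Der (Y :: G) Z -> Der G Z.
Proof.
  intros h h1 h2. eapply Dmp; [|exact h]. eapply Dmp. eapply Dmp. apply Dthm, pO3.
  apply Dded; auto. apply Dded; auto.
Qed.

Lemma extend (D : fm) (ps : list (fm * fm)) :
  (forall X Y, In (X,Y) ps -> prov_LC (FOr X Y)) -> forall G0, ~ Der G0 D ->
  exists G, incl G0 G /\ ~ Der G D /\ forall X Y, In (X,Y) ps -> Der G X \/ Der G Y.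
Proof.
  induction ps as [|[X Y] ps IH]; intros hps G0 hG0.
  - exists G0. split. intros x h; auto. split; auto. intros X Y [].
  - destruct (IH (fun X Y h => hps X Y (or_intror h)) G0 hG0) as [G1 [i1 [n1 p1]]].
    destruct (classic (Der (X :: G1) D)) as [hx|hx].
    + exists (Y :: G1). split. intros a ha; simpl; auto. split.
      * intro hy. apply n1. apply (DorE G1 X Y D); [apply Dthm, hps; simpl; auto | exact hx | exact hy].
      * intros X' Y' [e|h]. injection e; intros; subst. right; apply Dh.
        destruct (p1 _ _ h); [left|right]; apply Dcons; auto.
    + exists (X :: G1). split. intros a ha; simpl; auto. split; auto.
      intros X' Y' [e|h]. injection e; intros; subst. left; apply Dh.
      destruct (p1 _ _ h); [left|right]; apply Dcons; auto.
Qed.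

Fixpoint atoms (A : fm) : list fm :=
  match A with
  | Atom p ts => [Atom p ts]
  | FBot => []
  | FAnd B C | FOr B C | FImp B C => atoms B ++ atoms C
  end.

Definition Top : fm := FImp FBot FBot.

Lemma filter_le {A} (f g : A -> bool) l : (forall x, In x l -> f x = true -> g x = true) ->
  length (filter f l) <= length (filter g l).
Proof.
  induction l; simpl; intros h; auto.
  destruct (f a) eqn:E1; destruct (g a) eqn:E2; simpl.
  - apply le_n_S, IHl; auto.
  - rewrite (h a) in E2; auto; discriminate.
  - apply le_S, IHl; auto.
  - apply IHl; auto.
Qed.

Lemma filter_lt {A} (f g : A -> bool) l : (forall x, In x l -> f x = true -> g x = true) ->
  (exists x, In x l /\ f x = false /\ g x = true) ->
  length (filter f l) < length (filter g l).
Proof.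
  induction l; simpl; intros h [x [hx [e1 e2]]]. destruct hx.
  destruct hx as [<-|hx].
  - rewrite e1, e2. simpl. apply le_n_S, filter_le; auto.
  - destruct (f a) eqn:E1; destruct (g a) eqn:E2; simpl.
    + apply le_n_S, IHl; eauto.
    + rewrite (h a) in E2; auto; discriminate.
    + apply le_S. apply IHl; eauto.
    + apply IHl; eauto.
Qed.

Lemma filter_0 {A} (f : A -> bool) l : (forall x, In x l -> f x = false) -> length (filter f l) = 0.
Proof. induction l; simpl; intros h; auto. rewrite h; auto. Qed.

Section Model.
Variables (G : list fm) (L : list fm).
Definition leF a b := Der G (FImp a b).
Definition ltb (a b : fm) : bool :=
  if excluded_middle_informative (leF a b /\ ~ leF b a) then true else false.
Lemma ltb_spec a b : ltb a b = true <-> (leF a b /\ ~ leF b a).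
Proof. unfold ltb. destruct excluded_middle_informative; split; intros; auto; try discriminate; tauto. Qed.
Definition rk (a : fm) : nat := length (filter (fun b => ltb b a) L).

Lemma leF_refl a : leF a a.
Proof. apply Dthm, pI. Qed.
Lemma leF_trans a b c : leF a b -> leF b c -> leF a c.
Proof. apply Dtrans. Qed.

Lemma rk_mono a a' : leF a a' -> rk a <= rk a'.
Proof.
  intros h. apply filter_le. intros x _ hx. apply ltb_spec in hx. apply ltb_spec.
  destruct hx as [h1 h2]. split. eapply leF_trans; eauto. intro h3. apply h2. eapply leF_trans; eauto.
Qed.

Lemma rk_strict a a' : In a L -> leF a a' -> ~ leF a' a -> rk a < rk a'.
Proof.
  intros hin h hn. apply filter_lt.
  - intros x _ hx. apply ltb_spec in hx. apply ltb_spec.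
    destruct hx as [h1 h2]. split. eapply leF_trans; eauto. intro h3. apply h2. eapply leF_trans; eauto.
  - exists a. split; auto. split.
    + destruct (ltb a a) eqn:E; auto. apply ltb_spec in E. exfalso; destruct E as [_ E]; apply E, leF_refl.
    + apply ltb_spec; auto.
Qed.

Lemma leF_top a : leF a Top.
Proof. eapply Dmp. apply Dthm, pK. apply Dthm, pEFQ. Qed.

Lemma rk_bot : rk FBot = 0.
Proof.
  apply filter_0. intros x _. destruct (ltb x FBot) eqn:E; auto. apply ltb_spec in E.
  exfalso. destruct E as [_ E]. apply E. apply Dthm, pEFQ.
Qed.

Definition Tv := rk Top.
Definition J (p : P) (ts : list (term F P)) := rk (Atom p ts).
Lemma J_bound p ts : J p ts <= Tv.
Proof. apply rk_mono, leF_top. Qed.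

Hypothesis tot : forall x y, In x L -> In y L -> leF x y \/ leF y x.
Hypothesis tot2 : forall x y, In x L -> In y L -> leF x (FImp x y) \/ Der G (FImp (FImp x y) x).
Hypothesis botL : In FBot L.
Hypothesis topL : In Top L.

Lemma key C : incl (atoms C) L ->
  exists e, In e L /\ leF C e /\ leF e C /\ pv F P Tv J C = rk e.
Proof.
  induction C; simpl; intros hinc.
  - exists (Atom p l). split. apply hinc; simpl; auto. split. apply leF_refl. split. apply leF_refl. reflexivity.
  - exists FBot. split; auto. split. apply leF_refl. split. apply leF_refl. symmetry; apply rk_bot.
  - destruct IHC1 as [e1 [i1 [a1 [b1 v1]]]]. intros x hx; apply hinc, in_or_app; auto.
    destruct IHC2 as [e2 [i2 [a2 [b2 v2]]]]. intros x hx; apply hinc, in_or_app; auto.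
    rewrite v1, v2. destruct (tot e1 e2 i1 i2) as [h|h].
    + exists e1. split; auto. split. eapply leF_trans; [apply Dthm, pA1|auto].
      split. apply Dded. eapply Dmp. eapply Dmp. apply Dthm, pA3.
      eapply Dmp. apply Dcons, b1. apply Dh.
      eapply Dmp. apply Dcons, b2. eapply Dmp. apply Dcons, h. apply Dh.
      pose proof (rk_mono _ _ h). lia.
    + exists e2. split; auto. split. eapply leF_trans; [apply Dthm, pA2|auto].
      split. apply Dded. eapply Dmp. eapply Dmp. apply Dthm, pA3.
      eapply Dmp. apply Dcons, b1. eapply Dmp. apply Dcons, h. apply Dh.
      eapply Dmp. apply Dcons, b2. apply Dh.
      pose proof (rk_mono _ _ h). lia.
  - destruct IHC1 as [e1 [i1 [a1 [b1 v1]]]]. intros x hx; apply hinc, in_or_app; auto.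
    destruct IHC2 as [e2 [i2 [a2 [b2 v2]]]]. intros x hx; apply hinc, in_or_app; auto.
    rewrite v1, v2. destruct (tot e1 e2 i1 i2) as [h|h].
    + exists e2. split; auto. split.
      eapply Dmp. eapply Dmp. apply Dthm, pO3. eapply leF_trans; eauto. auto.
      split. eapply leF_trans; [exact b2|apply Dthm, pO2].
      pose proof (rk_mono _ _ h). lia.
    + exists e1. split; auto. split.
      eapply Dmp. eapply Dmp. apply Dthm, pO3. auto. eapply leF_trans; eauto.
      split. eapply leF_trans; [exact b1|apply Dthm, pO1].
      pose proof (rk_mono _ _ h). lia.
  - destruct IHC1 as [e1 [i1 [a1 [b1 v1]]]]. intros x hx; apply hinc, in_or_app; auto.
    destruct IHC2 as [e2 [i2 [a2 [b2 v2]]]]. intros x hx; apply hinc, in_or_app; auto.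
    rewrite v1, v2. destruct (classic (leF e1 e2)) as [h|h].
    + exists Top. split; auto. split. apply leF_top. split.
      apply Dded. apply Dded. eapply Dmp. apply Dcons, Dcons, b2.
      eapply Dmp. apply Dcons, Dcons, h. eapply Dmp. apply Dcons, Dcons, a1. apply Dh.
      pose proof (rk_mono _ _ h). unfold gimp. destruct (Nat.leb_spec (rk e1) (rk e2)); auto; lia.
    + assert (h' : leF e2 e1). { destruct (tot e1 e2 i1 i2); tauto. }
      pose proof (rk_strict _ _ i2 h' h).
      exists e2. split; auto. split.
      * destruct (tot2 e1 e2 i1 i2) as [k|k].
        -- exfalso. apply h. apply Dded. eapply Dmp. eapply Dmp. apply Dcons, k. apply Dh. apply Dh.
        -- apply Dded.
           assert (q : Der (FImp C1 C2 :: G) (FImp e1 e2)).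
           { apply Dded. eapply Dmp. apply Dcons, Dcons, a2. eapply Dmp. apply Dcons, Dh.
             eapply Dmp. apply Dcons, Dcons, b1. apply Dh. }
           eapply Dmp. exact q. eapply Dmp. apply Dcons, k. exact q.
      * split. apply Dded. apply Dded. eapply Dmp. apply Dcons, Dcons, b2. apply Dcons, Dh.
        unfold gimp. destruct (Nat.leb_spec (rk e1) (rk e2)); auto; lia.
Qed.
End Model.
End Compl.

Theorem mainTheorem5 (Fsym Psym : Type) (D : formula Fsym Psym) :
  etfree_f D -> prov_et D -> prov_LC D.
Proof.
  intros hfree hprov. apply NNPP; intro hn.
  set (L := FBot :: Top _ _ :: atoms _ _ D).
  set (ps := flat_map (fun x => flat_map (fun y =>
               [(FImp x y, FImp y x); (FImp x (FImp x y), FImp (FImp x y) x)]) L) L).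
  assert (hps : forall X Y, In (X,Y) ps -> prov_LC (FOr X Y)).
  { intros X Y h. unfold ps in h. apply in_flat_map in h. destruct h as [x [_ h]].
    apply in_flat_map in h. destruct h as [y [_ h]]. simpl in h.
    destruct h as [e|[e|[]]]; injection e; intros; subst; apply pLin. }
  assert (inps : forall x y, In x L -> In y L -> In (FImp x y, FImp y x) ps /\
                 In (FImp x (FImp x y), FImp (FImp x y) x) ps).
  { intros x y hx hy. unfold ps. split; apply in_flat_map; exists x; split; auto;
    apply in_flat_map; exists y; split; auto; simpl; auto. }
  assert (hn0 : ~ Der _ _ [] D). { intro h; apply hn, Dnil, h. }
  destruct (extend _ _ D ps hps [] hn0) as [G [_ [nG pG]]].
  assert (tot : forall x y, In x L -> In y L -> leF _ _ G x y \/ leF _ _ G y x).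
  { intros x y hx hy. apply pG. apply inps; auto. }
  assert (tot2 : forall x y, In x L -> In y L -> leF _ _ G x (FImp x y) \/ Der _ _ G (FImp (FImp x y) x)).
  { intros x y hx hy. apply pG. apply inps; auto. }
  destruct (key _ _ G L tot tot2 ltac:(simpl; auto) ltac:(simpl; auto) D) as [e [ie [a [b v]]]].
  { intros x hx. simpl; auto. }
  pose proof (et_sound _ _ _ _ (@J_bound _ _ G L) D hprov (rid _ _)) as hs.
  rewrite (proj2 (eval_free _ _ _ _) D hfree) in hs.
  rewrite v in hs. unfold Tv in hs.
  destruct (classic (leF _ _ G (Top _ _) e)) as [k|k].
  - apply nG. eapply Dmp. exact b. eapply Dmp. exact k. apply Dthm, pEFQ.
  - pose proof (rk_strict _ _ G L _ _ ie (leF_top _ _ G e) k). lia.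
Qed.
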